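(* Let $q\ge7$ be a prime power and $p$ an odd prime, let $E/\mathbb{F}_q$ be an elliptic curve with $E(\mathbb{F}_q)\cong\mathbb{Z}_p\oplus\mathbb{Z}_p$, $\mathcal{P}=E(\mathbb{F}_q)$, let $Q\in E(\mathbb{F}_{q^2})\setminus E(\mathbb{F}_q)$ satisfy $Q\oplus\phi(Q)=\infty$, let $k$ be an integer with $p\mid k$ and $0<k<p^2/2$, and let $D=k(Q+\phi(Q))$. Then the NMDS code $\mathcal{C}(E,\mathcal{P},D)$, with parameters $[p^2,2k,p^2-2k]$, satisfies $A_w>0$ for every $w$ with $p^2-2k\le w\le p^2$.
   Context: $A_w$ is the number of codewords of Hamming weight $w$. Elliptic curve $E/\mathbb{F}_q$: nonsingular Weierstrass curve with point at infinity $\infty$ as identity of the group law $\oplus$; $\phi$ is the $q$-Frobenius $(x,y)\mapsto(x^q,y^q)$. For $\mathcal{P}=\{P_1,\dots,P_n\}\subseteq E(\mathbb{F}_q)$ and a Galois-invariant divisor $D$ with support disjoint from $\mathcal{P}$ and $0<\deg D<n$, $\mathcal{C}(E,\mathcal{P},D)=\{(f(P_1),\dots,f(P_n)):f\in\mathscr{L}(D)\}$ where $\mathscr{L}(D)=\{f\in\mathbb{F}_q(E)^\times:\operatorname{div}(f)\ge-D\}\cup\{0\}$. *)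

(* Defs.v *)
From HB Require Import structures.
From mathcomp Require Import all_boot all_algebra all_field.
From mathcomp Require Import boolp.
Set Implicit Arguments. Unset Strict Implicit. Unset Printing Implicit Defensive.
Import GRing.Theory.
Local Open Scope ring_scope.

(* y^2 + a1 x y + a3 y = x^3 + a2 x^2 + a4 x + a6 *)
Record wcurve (L : fieldType) := WCurve {
  wa1 : L; wa2 : L; wa3 : L; wa4 : L; wa6 : L }.

Definition wmap (F L : fieldType) (j : {rmorphism F -> L}) (E : wcurve F) :
  wcurve L := WCurve (j (wa1 E)) (j (wa2 E)) (j (wa3 E)) (j (wa4 E)) (j (wa6 E)).

(* Projective points: None is the point at infinity, Some (a,b) affine. *)
Definition onEb (L : fieldType) (E : wcurve L) (P : option (L * L)) : bool :=
  match P with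
  | None => true
  | Some (a, b) =>
      b ^+ 2 + wa1 E * a * b + wa3 E * b ==
      a ^+ 3 + wa2 E * a ^+ 2 + wa4 E * a + wa6 E
  end.

(* Nonsingularity: no affine point over any finite extension of the base
   field has both partial derivatives of the Weierstrass equation vanishing
   (singular points are algebraic, and infinity is always smooth). *)
Definition nonsingular (F : finFieldType) (E : wcurve F) : Prop :=
  forall (L : finFieldType) (j : {rmorphism F -> L}) (a b : L),
    onEb (wmap j E) (Some (a, b)) ->
    ~ (j (wa1 E) * b - 3%:R * a ^+ 2 - 2%:R * j (wa2 E) * a - j (wa4 E) = 0 /\
       2%:R * b + j (wa1 E) * a + j (wa3 E) = 0).

Definition ptmap (K L : fieldType) (s : {rmorphism K -> L})
  (P : option (K * K)) : option (L * L) :=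
  omap (fun ab => (s ab.1, s ab.2)) P.

Definition frob (K : fieldType) (q : nat) (P : option (K * K)) :
  option (K * K) := omap (fun ab => (ab.1 ^+ q, ab.2 ^+ q)) P.

(* The chord-tangent group law (Silverman, Alg. III.2.3). *)
Definition addE (L : fieldType) (E : wcurve L) (P1 P2 : option (L * L)) :
  option (L * L) :=
  match P1, P2 with
  | None, _ => P2
  | _, None => P1
  | Some (x1, y1), Some (x2, y2) =>
      if (x1 == x2) && (y1 + y2 + wa1 E * x2 + wa3 E == 0) then None
      else
        let lam := if x1 != x2 then (y2 - y1) / (x2 - x1)
                   else (3%:R * x1 ^+ 2 + 2%:R * wa2 E * x1 + wa4 E
                         - wa1 E * y1) / (2%:R * y1 + wa1 E * x1 + wa3 E) in
        let nu := if x1 != x2 then (y1 * x2 - y2 * x1) / (x2 - x1)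
                  else (- x1 ^+ 3 + wa4 E * x1 + 2%:R * wa6 E - wa3 E * y1)
                        / (2%:R * y1 + wa1 E * x1 + wa3 E) in
        let x3 := lam ^+ 2 + wa1 E * lam - wa2 E - x1 - x2 in
        Some (x3, - (lam + wa1 E) * x3 - nu - wa3 E)
  end.

(* An element of {poly {poly L}} is a polynomial in y whose coefficients are
   polynomials in x. *)
Definition ev2 (L : fieldType) (p : {poly {poly L}}) (a b : L) : L :=
  (map_poly (fun c : {poly L} => c.[a]) p).[b].

Definition Xx (L : fieldType) : {poly {poly L}} := ('X : {poly L})%:P.

Definition wpoly (L : fieldType) (E : wcurve L) : {poly {poly L}} :=
  'X ^+ 2 + (wa1 E)%:P%:P * Xx L * 'X + (wa3 E)%:P%:P * 'X
  - (Xx L ^+ 3 + (wa2 E)%:P%:P * Xx L ^+ 2 + (wa4 E)%:P%:P * Xx L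
     + (wa6 E)%:P%:P).

Definition inW (L : fieldType) (E : wcurve L) (p : {poly {poly L}}) : Prop :=
  exists K : {poly {poly L}}, p = K * wpoly E.

(* A rational function on E is represented by a pair (G, H), meaning G/H in
   Frac(L[x,y]/(W)), with H not in the ideal (W). *)
Definition rfun (L : fieldType) := ({poly {poly L}} * {poly {poly L}})%type.

Definition wf_rfun (L : fieldType) (E : wcurve L) (f : rfun L) : Prop :=
  ~ inW E f.2.

Definition nonzero_rfun (L : fieldType) (E : wcurve L) (f : rfun L) : Prop :=
  ~ inW E f.1 /\ ~ inW E f.2.

Definition req (L : fieldType) (E : wcurve L) (f g : rfun L) : Prop :=
  inW E (f.1 * g.2 - g.1 * f.2).

Definition rmul (L : fieldType) (f g : rfun L) : rfun L :=
  (f.1 * g.1, f.2 * g.2).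
Definition rdiv (L : fieldType) (f g : rfun L) : rfun L :=
  (f.1 * g.2, f.2 * g.1).
Definition rexp (L : fieldType) (f : rfun L) (m : nat) : rfun L :=
  (f.1 ^+ m, f.2 ^+ m).

Definition rmap (F L : fieldType) (j : {rmorphism F -> L}) (f : rfun F) :
  rfun L := (map_poly (map_poly j) f.1, map_poly (map_poly j) f.2).

Definition totdeg_le (L : fieldType) (p : {poly {poly L}}) (d : nat) : Prop :=
  forall i : nat, (p`_i != 0) -> (size (nth 0%R p i) + i <= d.+1)%N.

(* At infinity we use the homogeneous representation
   G'(X,Y,Z)/H'(X,Y,Z) of common degree d, evaluated at (0:1:0), i.e. the
   coefficients of y^d. *)
Definition val_at (L : fieldType) (E : wcurve L) (R : option (L * L))
    (f : rfun L) (c : L) : Prop :=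
  match R with
  | Some (a, b) =>
      exists g : rfun L, req E f g /\ ev2 g.2 a b != 0 /\
                         c = ev2 g.1 a b / ev2 g.2 a b
  | None =>
      exists (d : nat) (g : rfun L), req E f g /\
        totdeg_le g.1 d /\ totdeg_le g.2 d /\
        (g.2)`_d`_0 != 0 /\ c = (g.1)`_d`_0 / (g.2)`_d`_0
  end.

Definition regular_at (L : fieldType) (E : wcurve L) (R : option (L * L))
    (f : rfun L) : Prop := exists c, val_at E R f c.

Definition uniformizer (L : fieldType) (E : wcurve L) (R : option (L * L))
    (t : rfun L) : Prop :=
  nonzero_rfun E t /\ val_at E R t 0 /\
  forall g : rfun L, wf_rfun E g -> val_at E R g 0 -> regular_at E R (rdiv g t).

Definition ord_ge_neg (L : fieldType) (E : wcurve L) (R : option (L * L))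
    (f : rfun L) (m : nat) : Prop :=
  exists t : rfun L, uniformizer E R t /\ regular_at E R (rmul (rexp t m) f).

(* A point R of
   E over a finite extension L of F lies in the support of D = k(Q + phi(Q))
   iff R is the image of Q under some F-embedding of K into L (the two such
   images being Q and phi(Q)); then D(R) = k, otherwise D(R) = 0.
   f is in L(D) iff div f >= -D, i.e. ord_R f >= -D(R) at every point R of E
   over the algebraic closure of F (every such point is defined over a
   finite extension L of F, and is L-rational there). *)
Definition conj_of (F K L : fieldType) (iota : {rmorphism F -> K})
    (j : {rmorphism F -> L}) (Q : option (K * K)) (R : option (L * L)) : Prop :=
  exists s : {rmorphism K -> L}, (forall x, s (iota x) = j x) /\ ptmap s Q = R.

Definition inLD (F K : finFieldType) (E : wcurve F) (iota : {rmorphism F -> K})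
    (Q : option (K * K)) (k : nat) (f : rfun F) : Prop :=
  wf_rfun E f /\
  forall (L : finFieldType) (j : {rmorphism F -> L}) (R : option (L * L)),
    onEb (wmap j E) R ->
    (conj_of iota j Q R -> ord_ge_neg (wmap j E) R (rmap j f) k) /\
    (~ conj_of iota j Q R -> ord_ge_neg (wmap j E) R (rmap j f) 0).

Definition ratpts (F : finFieldType) (E : wcurve F) : {set option (F * F)} :=
  [set P | onEb E P].

(* Codewords: evaluation vectors (f(P_1),...,f(P_n)) of f in L(D), with
   P_i := enum_val i the enumeration of E(F_q). *)
Definition in_code (F K : finFieldType) (E : wcurve F)
    (iota : {rmorphism F -> K}) (Q : option (K * K)) (k : nat)
    (c : 'rV[F]_#|ratpts E|) : Prop :=
  exists f : rfun F, inLD E iota Q k f /\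
    forall i : 'I_#|ratpts E|, val_at E (enum_val i) f (c 0 i).

Arguments in_code {F K} E iota Q k c.

Definition hweight (F : finFieldType) (n : nat) (c : 'rV[F]_n) : nat :=
  #|[set i : 'I_n | c 0 i != 0]|.

Definition A_w (F K : finFieldType) (E : wcurve F)
    (iota : {rmorphism F -> K}) (Q : option (K * K)) (k w : nat) : nat :=
  #|[set c : 'rV[F]_#|ratpts E| | `[< in_code E iota Q k c >] && (hweight c == w)]|.

Definition ratpts_iso_ZpZp (F : finFieldType) (E : wcurve F) (p : nat) : Prop :=
  exists psi : 'Z_p * 'Z_p -> option (F * F),
    [/\ forall u, onEb E (psi u),
        injective psi,
        forall P, onEb E P -> exists u, psi u = P &
        forall u v, psi (u.1 + v.1, u.2 + v.2) = addE E (psi u) (psi v)].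

(* Main.v *)
Require Import Defs.
From HB Require Import structures.
From mathcomp Require Import all_boot all_algebra all_field.
From mathcomp Require Import boolp ring zify.
Import GRing.Theory.
Local Open Scope ring_scope.
Set Implicit Arguments. Unset Strict Implicit. Unset Printing Implicit Defensive.

Section Gen.
Variable (L : fieldType) (E : wcurve L).
Local Notation P2 := {poly {poly L}}.
Local Notation x := (Xx L).
Local Notation cc c := ((c%:P)%:P : {poly {poly L}}).
Implicit Types (p q : P2) (a b c : L).

Lemma ev2E (p : P2) a b : ev2 p a b = (map_poly (horner_eval a) p).[b].
Proof. by rewrite /ev2; congr (_.[_]); apply: eq_map_poly => c; rewrite horner_evalE. Qed.

Lemma ev2D p q a b : ev2 (p + q) a b = ev2 p a b + ev2 q a b.
Proof. by rewrite !ev2E rmorphD hornerD. Qed.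
Lemma ev2N p a b : ev2 (- p) a b = - ev2 p a b.
Proof. by rewrite !ev2E rmorphN hornerN. Qed.
Lemma ev2B p q a b : ev2 (p - q) a b = ev2 p a b - ev2 q a b.
Proof. by rewrite ev2D ev2N. Qed.
Lemma ev2M p q a b : ev2 (p * q) a b = ev2 p a b * ev2 q a b.
Proof. by rewrite !ev2E rmorphM hornerM. Qed.
Lemma ev2C c a b : ev2 (cc c) a b = c.
Proof. by rewrite ev2E map_polyC hornerC /= horner_evalE hornerC. Qed.
Lemma ev2x a b : ev2 x a b = a.
Proof. by rewrite ev2E /Xx map_polyC hornerC /= horner_evalE hornerX. Qed.
Lemma ev2X a b : ev2 'X a b = b.
Proof. by rewrite ev2E map_polyX hornerX. Qed.
Lemma ev21 a b : ev2 1 a b = 1.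
Proof. by rewrite -[1]/(cc 1) ev2C. Qed.
Lemma ev2Xn p n a b : ev2 (p ^+ n) a b = ev2 p a b ^+ n.
Proof. by elim: n => [|n IH]; rewrite ?expr0 ?ev21 // !exprS ev2M IH. Qed.

Definition ev2s := (ev2D, ev2N, ev2M, ev2C, ev2x, ev2X, ev21, ev2Xn).

Lemma inW0 : inW E 0. Proof. by exists 0; rewrite mul0r. Qed.
Lemma inWD p q : inW E p -> inW E q -> inW E (p + q).
Proof. by move=> [a ->] [b ->]; exists (a + b); rewrite mulrDl. Qed.
Lemma inWM r p : inW E p -> inW E (r * p).
Proof. by move=> [a ->]; exists (r * a); rewrite mulrA. Qed.

Lemma req_refl f : req E f f.
Proof. by rewrite /req subrr; apply: inW0. Qed.

Lemma wpoly_coef2 : (wpoly E)`_2 = 1.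
Proof. by rewrite /wpoly /Xx !coefE /=; ring. Qed.

Lemma size_wpoly : (3 <= size (wpoly E))%N.
Proof.
case: (leqP 3 (size (wpoly E))) => // h.
by move: wpoly_coef2; rewrite nth_default ?oner_eq0 //; move=> /esym /eqP; rewrite oner_eq0.
Qed.

Lemma notinW p : p != 0 -> (size p <= 2)%N -> ~ inW E p.
Proof.
move=> p0 sp [K hK]; move: p0 sp; rewrite hK mulf_eq0 negb_or => /andP[K0 W0].
rewrite size_mul //; have := size_wpoly; have : (0 < size K)%N by rewrite size_poly_gt0.
move=> h1 h2; rewrite -subn1; move: h1 h2; set s1 := size K; set s2 := size (wpoly E); clearbody s1 s2; lia.
Qed.


Lemma xsplit p a : exists U : P2,
  p = (x - cc a) * U + map_poly polyC (map_poly (horner_eval a) p) /\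
  forall i, leq (size U`_i) (size p`_i).-1.
Proof.
pose U := \poly_(i < size p) ((p`_i - ((p`_i).[a])%:P) %/ ('X - a%:P)).
have dv i : ('X - a%:P) %| (p`_i - ((p`_i).[a])%:P).
  by rewrite dvdp_XsubCl /root !hornerE subrr.
exists U; split.
  apply/polyP => i; rewrite coefD /Xx -rmorphB coefCM coef_poly coef_map /=.
  rewrite coef_map /= horner_evalE.
  case: (ltnP i (size p)) => hi.
    by rewrite mulrC divpK // subrK.
  by rewrite mulr0 add0r nth_default // horner0.
move=> i; rewrite coef_poly; case: (ltnP i (size p)) => hi; last by rewrite size_poly0.
rewrite size_divp ?polyXsubC_eq0 // size_XsubC /=.
have [->|pi0] := eqVneq p`_i 0; first by rewrite horner0 subr0 size_poly0.
have := size_polyC ((p`_i).[a]); have : leq 1 (size p`_i) by rewrite size_poly_gt0.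
have := size_add (p`_i) (- ((p`_i).[a])%:P); rewrite size_opp.
set s1 := size _; set s2 := size _; set s3 := size _; clearbody s1 s2 s3.
move=> h1 h2 h3; rewrite -!subn1; move: h1 h3; case: (_ != 0) => /= h1 h3; lia.
Qed.

Lemma taylor p a b : ev2 p a b = 0 ->
  exists U V : P2, p = (x - cc a) * U + ('X - cc b) * V.
Proof.
move=> h; have [U [hU _]] := xsplit p a.
have : root (map_poly (horner_eval a) p) b by rewrite /root -ev2E h.
move=> /factor_theorem [q hq].
exists U, (map_poly polyC q); rewrite {1}hU hq rmorphM /= mulrC.
rewrite rmorphB /= map_polyX map_polyC /=; ring.
Qed.

Section Aff.
Variables (a b : L).
Definition W1 : P2 := cc (wa1 E * b) - (x ^+ 2 + cc a * x + cc (a ^+ 2))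
   - cc (wa2 E) * (x + cc a) - cc (wa4 E).
Definition W2 : P2 := 'X + cc b + cc (wa1 E) * x + cc (wa3 E).

Lemma wdecomp : onEb E (Some (a, b)) ->
  wpoly E = (x - cc a) * W1 + ('X - cc b) * W2.
Proof.
move=> /eqP h.
have e : wpoly E - ((x - cc a) * W1 + ('X - cc b) * W2) =
  cc (b ^+ 2 + wa1 E * a * b + wa3 E * b - (a ^+ 3 + wa2 E * a ^+ 2 + wa4 E * a + wa6 E)).
  rewrite /wpoly /W1 /W2 /Xx; ring.
by apply/eqP; rewrite -subr_eq0 e h subrr !polyC0.
Qed.

Lemma ev2W1 : ev2 W1 a b = wa1 E * b - 3%:R * a ^+ 2 - 2%:R * wa2 E * a - wa4 E.
Proof. rewrite /W1 !ev2s; ring. Qed.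
Lemma ev2W2 : ev2 W2 a b = 2%:R * b + wa1 E * a + wa3 E.
Proof. rewrite /W2 !ev2s; ring. Qed.
End Aff.

Lemma unif_gen a b (t s B1 B2 : P2) :
  wpoly E = t * B1 + s * B2 -> ev2 B2 a b != 0 -> ev2 t a b = 0 ->
  t != 0 -> (size t <= 2)%N ->
  (forall G, ev2 G a b = 0 -> exists U V : P2, G = t * U + s * V) ->
  uniformizer E (Some (a, b)) (t, 1).
Proof.
move=> hW hB2 ht t0 st hsplit; split; [|split].
- split; first exact: notinW.
  by apply: notinW; rewrite ?oner_eq0 ?size_poly1.
- exists (t, 1); split; first exact: req_refl.
  by rewrite /= ev21 ht mul0r oner_eq0.
move=> g _ [g' [[K hK] [hg2 hg1]]].
have g1z : ev2 g'.1 a b = 0.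
  by move/eqP: hg1; rewrite eq_sym mulf_eq0 invr_eq0 (negbTE hg2) orbF => /eqP.
have [U [V hG]] := hsplit _ g1z.
exists (ev2 (U * B2 - V * B1) a b / ev2 (g'.2 * B2) a b).
exists (U * B2 - V * B1, g'.2 * B2); split; last first.
  by split => //; rewrite ev2M mulf_neq0.
exists (B2 * K + g.2 * V) => /=.
have -> : (B2 * K + g.2 * V) * wpoly E = B2 * (K * wpoly E) + g.2 * V * wpoly E by ring.
rewrite -hK hW hG; ring.
Qed.


Lemma Wnz_x a b : 2%:R * b + wa1 E * a + wa3 E != 0 -> onEb E (Some (a, b)) ->
  uniformizer E (Some (a, b)) (x - cc a, 1).
Proof.
move=> hy hon; apply: (@unif_gen a b (x - cc a) ('X - cc b) (W1 a b) (W2 b)).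
- exact: wdecomp.
- by rewrite ev2W2.
- by rewrite !ev2s subrr.
- by rewrite /Xx -rmorphB polyC_eq0 polyXsubC_eq0.
- by rewrite /Xx -rmorphB size_polyC; case: (_ != 0).
- move=> G; exact: taylor.
Qed.

Lemma unif_aff a b : onEb E (Some (a, b)) ->
  ~ (wa1 E * b - 3%:R * a ^+ 2 - 2%:R * wa2 E * a - wa4 E = 0 /\ 2%:R * b + wa1 E * a + wa3 E = 0) ->
  exists t, uniformizer E (Some (a, b)) t.
Proof.
move=> hon hns.
have [hy|hy] := eqVneq (2%:R * b + wa1 E * a + wa3 E) 0; last first.
  by exists (x - cc a, 1); apply: Wnz_x.
have hx : wa1 E * b - 3%:R * a ^+ 2 - 2%:R * wa2 E * a - wa4 E != 0.
  by apply/eqP => h; apply: hns.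
exists ('X - cc b, 1); apply: (@unif_gen a b ('X - cc b) (x - cc a) (W2 b) (W1 a b)).
- by rewrite (wdecomp hon) addrC.
- by rewrite ev2W1.
- by rewrite !ev2s subrr.
- by rewrite polyXsubC_eq0.
- by rewrite size_XsubC.
- move=> G /taylor [U [V ->]]; exists V, U; exact: addrC.
Qed.

Lemma tdP p d : totdeg_le p d <-> forall i, leq (size p`_i) (d.+1 - i).
Proof.
split=> h i.
  have [->|nz] := eqVneq p`_i 0; first by rewrite size_poly0.
  have := h i nz; set s1 := size _; clearbody s1; lia.
move=> nz; have := h i; have : leq 1 (size p`_i) by rewrite size_poly_gt0.
set s1 := size _; clearbody s1; lia.
Qed.

Lemma td_add p q d : totdeg_le p d -> totdeg_le q d -> totdeg_le (p + q) d.
Proof.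
move=> /tdP hp /tdP hq; apply/tdP => i; rewrite coefD.
by apply: leq_trans (size_add _ _) _; rewrite geq_max hp hq.
Qed.
Lemma td_opp p d : totdeg_le p d -> totdeg_le (- p) d.
Proof. by move=> /tdP hp; apply/tdP => i; rewrite coefN size_opp. Qed.
Lemma td_sub p q d : totdeg_le p d -> totdeg_le q d -> totdeg_le (p - q) d.
Proof. by move=> hp hq; apply: td_add => //; apply: td_opp. Qed.
Lemma td_mono p d e : (d <= e)%N -> totdeg_le p d -> totdeg_le p e.
Proof.
move=> de /tdP hp; apply/tdP => i; apply: leq_trans (hp i) _.
clear hp; lia.
Qed.
Lemma td0 d : totdeg_le (0 : P2) d.
Proof. by move=> i; rewrite coef0 eqxx. Qed.

Lemma td_mul p q d e : totdeg_le p d -> totdeg_le q e -> totdeg_le (p * q) (d + e).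
Proof.
move=> /tdP hp /tdP hq; apply/tdP => n; rewrite coefM.
apply: leq_trans (size_sum _ _ _) _; apply/bigmax_leqP => [[i hi]] _ /=.
have [->|nz1] := eqVneq p`_i 0; first by rewrite mul0r size_poly0.
have [->|nz2] := eqVneq q`_(n - i) 0; first by rewrite mulr0 size_poly0.
rewrite size_mul //.
have := hp i; have := hq (n - i)%N.
have : leq 1 (size p`_i) by rewrite size_poly_gt0.
have : leq 1 (size q`_(n - i)) by rewrite size_poly_gt0.
set s1 := size _; set s2 := size _; clearbody s1 s2 => h1 h2 h3 h4.
rewrite -subn1; lia.
Qed.

Lemma td_cc c : totdeg_le (cc c) 0.
Proof.
apply/tdP => -[|i]; last by rewrite coefC /= size_poly0.
by rewrite coefC /= size_polyC; case: (_ != 0).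
Qed.
Arguments td_cc : clear implicits.
Lemma td_x : totdeg_le x 1.
Proof.
apply/tdP => -[|i]; last by rewrite /Xx coefC /= size_poly0.
by rewrite /Xx coefC /= size_polyX.
Qed.
Lemma td_X : totdeg_le ('X : P2) 1.
Proof.
apply/tdP => -[|[|i]]; rewrite coefX //= ?size_poly0 ?size_poly1 //.
Qed.
Lemma td_1 : totdeg_le (1 : P2) 0.
Proof. by rewrite -[1]/(cc 1); apply: td_cc. Qed.

Lemma td_zero p d i : totdeg_le p d -> (d < i)%N -> p`_i = 0.
Proof.
move=> /tdP h di; apply/eqP; rewrite -size_poly_eq0 -leqn0.
apply: leq_trans (h i) _; lia.
Qed.

Lemma top_mul p q d e : totdeg_le p d -> totdeg_le q e ->
  (p * q)`_(d + e)`_0 = p`_d`_0 * q`_e`_0.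
Proof.
move=> hp hq; have hd : (d < (d + e).+1)%N by rewrite ltnS leq_addr.
rewrite coefM (bigD1 (Ordinal hd)) //=.
  rewrite addKn big1 ?addr0 ?coef0M // => -[i hi] /=; rewrite -val_eqE /= => ne.
  case: (ltngtP i d) ne => // h _.
    by rewrite (td_zero hq) ?mulr0 //; lia.
  by rewrite (td_zero hp) ?mul0r.
Qed.

Lemma top_add p q n : (p + q)`_n`_0 = p`_n`_0 + q`_n`_0.
Proof. by rewrite !coefD. Qed.


Definition Qf (c1 c2 c3 c4 c5 : L) : P2 :=
  'X * 'X + cc c1 * x * 'X + cc c2 * 'X + cc c3 * (x * x) + cc c4 * x + cc c5.

Lemma td_Qf c1 c2 c3 c4 c5 : totdeg_le (Qf c1 c2 c3 c4 c5) 2.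
Proof.
have t1 : totdeg_le x 2 by apply: (td_mono _ td_x).
have t0 (c : L) : totdeg_le (cc c) 2.
  exact: (td_mono (isT : (0 <= 2)%N) (td_cc c)).
apply: td_add (t0 _); apply: td_add; last by apply: (td_mul (td_cc _) t1).
apply: td_add; last by apply: (td_mul (td_cc _) (td_mul td_x td_x)).
apply: td_add; last by apply: (td_mul (td_cc _) (td_mono _ td_X)).
apply: td_add; first exact: (td_mul td_X td_X).
exact: (td_mul (td_mul (td_cc _) td_x) td_X).
Qed.

Lemma top_Qf c1 c2 c3 c4 c5 : (Qf c1 c2 c3 c4 c5)`_2`_0 = 1.
Proof. rewrite /Qf /Xx !coefE /=; ring. Qed.

Definition Vp : P2 := Qf (wa1 E) (wa3 E) (- wa2 E) (- wa4 E) (- wa6 E).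
Lemma VpE : wpoly E = Vp - x * x * x.
Proof. rewrite /Vp /Qf /wpoly; ring. Qed.

Lemma td_Vp : totdeg_le Vp 2. Proof. exact: td_Qf. Qed.
Lemma top_Vp : Vp`_2`_0 = 1. Proof. exact: top_Qf. Qed.

Lemma unif_inf : uniformizer E None (x, 'X).
Proof.
have x0 : x != 0 by rewrite /Xx polyC_eq0 polyX_eq0.
have sx : (size x <= 2)%N by rewrite /Xx size_polyC; case: (_ != 0).
split; [|split].
- split; first exact: notinW.
  by apply: notinW; rewrite ?polyX_eq0 ?size_polyX.
- exists 1%N, (x, 'X); split; first exact: req_refl.
  split; first exact: td_x. split; first exact: td_X.
  by rewrite /= /Xx !coefE /= oner_eq0 mul0r.
move=> g _ [D [g' [[K hK] [h1 [h2 [hc hv]]]]]].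
have g1z : g'.1`_D`_0 = 0.
  by move/eqP: hv; rewrite eq_sym mulf_eq0 invr_eq0 (negbTE hc) orbF => /eqP.
have [A [hA hAs]] := xsplit g'.1 0.
rewrite !rmorph0 subr0 in hA.
set B0 := map_poly _ _ in hA.
have tA : totdeg_le (A * 'X) D.
  apply/tdP => -[|j]; rewrite coefMX /= ?size_poly0 //.
  apply: leq_trans (hAs j) _; have /tdP := h1; move/(_ j).
  set s1 := size _; clearbody s1 => hh; rewrite -subn1; lia.
have tB : totdeg_le (B0 * 'X) D.
  apply/tdP => -[|j]; rewrite coefMX /= ?size_poly0 //.
  rewrite /B0 coef_map /= coef_map /= horner_evalE.
  case: (ltngtP j D) => hj.
  - by apply: leq_trans (size_polyC_leq1 _) _; lia.
  - by rewrite (td_zero h1 hj) horner0 polyC0 size_poly0.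
  - by rewrite hj horner_coef0 g1z polyC0 size_poly0.
exists (((A * 'X) * Vp + x * x * (B0 * 'X))`_(D + 2)`_0 / (g'.2 * Vp)`_(D + 2)`_0).
exists (D + 2)%N, ((A * 'X) * Vp + x * x * (B0 * 'X), g'.2 * Vp) => /=.
split.
  exists ('X * Vp * K + 'X * g.2 * B0).
  have -> : ('X * Vp * K + 'X * g.2 * B0) * wpoly E =
     'X * Vp * (K * wpoly E) + 'X * g.2 * B0 * wpoly E by ring.
  rewrite -hK hA VpE /=; ring.
split.
  apply: td_add; first exact: (td_mul tA td_Vp).
  rewrite addnC; apply: td_mul tB; exact: td_mul td_x td_x.
split; first exact: (td_mul h2 td_Vp).
split => //.
by rewrite (top_mul h2 td_Vp) top_Vp mulr1.
Qed.

Lemma val_mul R f g c1 c2 : val_at E R f c1 -> val_at E R g c2 ->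
  val_at E R (rmul f g) (c1 * c2).
Proof.
have hreq f' g' : req E f f' -> req E g g' -> req E (rmul f g) (rmul f' g').
  move=> [K1 hK1] [K2 hK2]; exists (K1 * (g.1 * g'.2) + (f'.1 * f.2) * K2).
  have -> : (K1 * (g.1 * g'.2) + f'.1 * f.2 * K2) * wpoly E =
    (K1 * wpoly E) * (g.1 * g'.2) + (f'.1 * f.2) * (K2 * wpoly E) by ring.
  rewrite -hK1 -hK2 /rmul /=; ring.
case: R => [[a b]|].
  move=> [f' [r1 [n1 ->]]] [g' [r2 [n2 ->]]].
  exists (rmul f' g'); split; first exact: hreq.
  by rewrite /rmul /= !ev2M mulf_neq0 // mulf_div.
move=> [d1 [f' [r1 [t11 [t12 [n1 ->]]]]]] [d2 [g' [r2 [t21 [t22 [n2 ->]]]]]].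
exists (d1 + d2)%N, (rmul f' g'); split; first exact: hreq.
rewrite /rmul /=; split; first exact: td_mul.
split; first exact: td_mul.
by rewrite !top_mul // mulf_neq0 // mulf_div.
Qed.

Section Fac.
Variable a : L.
Local Notation u := (x - cc a).
Definition H3 : P2 := Qf (wa1 E) (wa3 E) (- wa2 E - 3%:R * a) (3%:R * a ^+ 2 - wa4 E)
   (- a ^+ 3 - wa6 E).
Lemma H3E : H3 = u ^+ 3 + wpoly E.
Proof. rewrite /H3 /Qf /wpoly; ring. Qed.

Lemma td_u : totdeg_le u 1.
Proof. by apply: td_sub td_x (td_mono _ (td_cc _)). Qed.
Lemma top_uu : (u * u)`_2`_0 = 0.
Proof. by rewrite (top_mul td_u td_u) /Xx !coefE /= !subrr mul0r. Qed.

Lemma vinf_fac b : val_at E None (x - cc b, u) 1.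
Proof.
exists 2%N, (H3 + cc (a - b) * (u * u), H3); split.
  exists (cc (a - b)); rewrite /= H3E; ring.
split.
  apply: td_add; first exact: td_Qf.
  exact: td_mul (td_cc _) (td_mul td_u td_u).
split; first exact: td_Qf.
rewrite /= top_Qf oner_eq0; split => //.
rewrite coefD coefD (top_mul (td_cc _) (td_mul td_u td_u)) top_uu top_Qf.
by rewrite mulr0 addr0 divr1.
Qed.

Lemma vinf_inv : val_at E None (1, u) 0.
Proof.
exists 2%N, (u * u, H3); split.
  by exists 1; rewrite /= H3E; ring.
split; first exact: td_mul td_u td_u.
split; first exact: td_Qf.
by rewrite /= top_Qf oner_eq0 top_uu mul0r.
Qed.

Lemma vaff_fac b al be : al != a ->
  val_at E (Some (al, be)) (x - cc b, u) ((al - b) / (al - a)).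
Proof.
move=> ha; exists (x - cc b, u); split; first exact: req_refl.
by rewrite /= !ev2s subr_eq0 ha.
Qed.

Lemma vaff_inv al be : al != a ->
  val_at E (Some (al, be)) (1, u) (1 / (al - a)).
Proof.
move=> ha; exists (1, u); split; first exact: req_refl.
by rewrite /= !ev2s subr_eq0 ha.
Qed.
End Fac.

Lemma val_one R : val_at E R (1, 1) 1.
Proof.
case: R => [[al be]|].
  by exists (1, 1); split; [exact: req_refl|rewrite /= ev21 oner_eq0 divr1].
exists 0%N, (1, 1); split; first exact: req_refl.
split; first exact: td_1. split; first exact: td_1.
by rewrite /= !coefE /= oner_eq0 divr1.
Qed.

End Gen.

Lemma fixed_in_image (F K : finFieldType) (iota : {rmorphism F -> K}) (z : K) :
  z ^+ #|F| = z -> exists c, z = iota c.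
Proof.
move=> hz; case: (pickP (fun c => z == iota c)) => [c /eqP ->|none]; first by exists c.
exfalso.
have q1 : (1 < #|F|)%N := card_finNzRing_gt1 F.
pose P : {poly K} := 'X^#|F| - 'X.
have sP : size P = #|F|.+1.
  rewrite /P size_addl ?size_polyXn // size_opp size_polyX; lia.
have P0 : P != 0 by rewrite -size_poly_eq0 sP.
have hall : all (root P) (z :: map iota (enum F)).
  rewrite /= /root /P !hornerE hz subrr eqxx /=.
  apply/allP => w /mapP [c _ ->]; rewrite /root !hornerE -rmorphXn expf_card subrr.
  by [].
have hu : uniq (z :: map iota (enum F)).
  rewrite /= map_inj_uniq ?enum_uniq ?andbT; last exact: fmorph_inj.
  by apply/mapP => -[c _ hc]; have := none c; rewrite hc eqxx.
have := max_poly_roots P0 hall hu.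
by rewrite sP /= size_map -cardE ltnn.
Qed.

Section QF.
Variables (F K : finFieldType) (E : wcurve F) (iota : {rmorphism F -> K}) (Q : option (K * K)).
Hypotheses (hQ : onEb (wmap iota E) Q)
  (hQnr : ~ (exists P, onEb E P /\ ptmap iota P = Q))
  (hfr : addE (wmap iota E) Q (frob #|F| Q) = None).

Lemma Q_form : exists a0 y1, [/\ Q = Some (iota a0, y1),
  forall c, y1 != iota c &
  2%:R * y1 + iota (wa1 E) * iota a0 + iota (wa3 E) != 0].
Proof.
case: Q hQ hQnr hfr => [[x1 y1]|] hQ' hnr hf; last first.
  by exfalso; apply: hnr; exists None.
move: hf; rewrite /= ; case: ifP => // /andP [/eqP hx /eqP hy] _.
have [a0 ha0] := fixed_in_image iota (esym hx).
have ny c : y1 != iota c.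
  apply/eqP => hc; apply: hnr; exists (Some (a0, c)); split; last by rewrite /= -ha0 -hc.
  move: hQ'; rewrite /= ha0 hc -!rmorphXn -!rmorphM -!rmorphD.
  by rewrite (inj_eq (fmorph_inj iota)).
exists a0, y1; split => //; first by rewrite ha0.
apply/eqP => h2.
have [c hc] : exists c, y1 = iota c.
  apply: (fixed_in_image iota).
  rewrite -hx in hy.
  apply/eqP; rewrite -subr_eq0; apply/eqP.
  have -> : y1 ^+ #|F| - y1 = (y1 + y1 ^+ #|F| + iota (wa1 E) * x1 + iota (wa3 E))
     - (2%:R * y1 + iota (wa1 E) * iota a0 + iota (wa3 E)) by rewrite ha0; ring.
  by rewrite hy h2 subrr.
by move: (ny c); rewrite hc eqxx.
Qed.

End QF.

Section QConj.
Variables (F K : finFieldType) (E : wcurve F) (iota : {rmorphism F -> K}) (a0 : F) (y1 : K).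
Hypotheses (hy1 : forall c, y1 != iota c)
  (hon : onEb (wmap iota E) (Some (iota a0, y1))) (hK : #|K| = (#|F| ^ 2)%N).

Definition r0 := a0 ^+ 3 + wa2 E * a0 ^+ 2 + wa4 E * a0 + wa6 E.
Definition r1 := - (wa1 E * a0 + wa3 E).

Lemma y1sq : y1 ^+ 2 = iota r0 + iota r1 * y1.
Proof.
move: hon => /= /eqP h; apply/eqP; rewrite -subr_eq0; apply/eqP.
have -> : y1 ^+ 2 - (iota r0 + iota r1 * y1) =
  (y1 ^+ 2 + iota (wa1 E) * iota a0 * y1 + iota (wa3 E) * y1) -
  (iota a0 ^+ 3 + iota (wa2 E) * iota a0 ^+ 2 + iota (wa4 E) * iota a0 + iota (wa6 E)).
  by rewrite /r0 /r1 !rmorphD !rmorphN ?rmorphM ?rmorphXn; ring.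
by rewrite h subrr.
Qed.

Lemma no_rat_a0 c : ~~ onEb E (Some (a0, c)).
Proof.
apply/negP => /= /eqP h.
have e : (y1 - iota c) * (y1 + iota c + iota (wa1 E * a0 + wa3 E)) = 0.
  have -> : (y1 - iota c) * (y1 + iota c + iota (wa1 E * a0 + wa3 E)) =
    (y1 ^+ 2 - (iota r0 + iota r1 * y1)) -
    iota (c ^+ 2 + wa1 E * a0 * c + wa3 E * c - (a0 ^+ 3 + wa2 E * a0 ^+ 2 + wa4 E * a0 + wa6 E)).
    by rewrite /r0 /r1 !rmorphB !rmorphD !rmorphN ?rmorphM ?rmorphXn; ring.
  by rewrite y1sq h !subrr rmorph0 subr0.
move/eqP: e; rewrite mulf_eq0 => /orP [|] /eqP e.
  by move: (hy1 c); rewrite -(subr0 y1) -e subKr eqxx.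
move: (hy1 (- c - (wa1 E * a0 + wa3 E))); rewrite rmorphB rmorphN.
have -> : y1 = - iota c - iota (wa1 E * a0 + wa3 E).
  by apply/eqP; rewrite -subr_eq0 -e; apply/eqP; ring.
by rewrite eqxx.
Qed.

Definition phi (c : F * F) : K := iota c.1 + iota c.2 * y1.

Lemma phi_inj : injective phi.
Proof.
move=> [c0 c1] [d0 d1]; rewrite /phi /= => h.
have [e1|ne] := eqVneq c1 d1.
  by move: h; rewrite e1 => /addIr /fmorph_inj ->.
exfalso; move: (hy1 ((c0 - d0) / (d1 - c1))).
rewrite fmorph_div !rmorphB.
have nz : iota d1 - iota c1 != 0 by rewrite -rmorphB fmorph_eq0 subr_eq0 eq_sym.
have -> : iota c0 - iota d0 = (iota d1 - iota c1) * y1.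
  by apply/eqP; rewrite -subr_eq0; apply/eqP; move: h => /eqP; rewrite -subr_eq0 => /eqP h'; rewrite -h'; ring.
by rewrite mulrC mulKf // eqxx.
Qed.

Definition decomp (z : K) : F * F := odflt (0, 0) [pick c | phi c == z].

Lemma phiK z : phi (decomp z) = z.
Proof.
have hc : (#|K| <= #|{: F * F}|)%N by rewrite card_prod hK expnS expn1.
have := inj_card_onto phi_inj hc z => /codomP [c hc'].
rewrite /decomp; case: pickP => [c' /eqP //|]; move/(_ c).
by rewrite hc' eqxx.
Qed.

Lemma decompK c : decomp (phi c) = c.
Proof. by apply: phi_inj; rewrite phiK. Qed.

Section Emb.
Variables (L : finFieldType) (j : {rmorphism F -> L}) (be : L).
Hypothesis hbe : onEb (wmap j E) (Some (j a0, be)).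

Lemma besq : be ^+ 2 = j r0 + j r1 * be.
Proof.
move: hbe => /= /eqP h; apply/eqP; rewrite -subr_eq0; apply/eqP.
have -> : be ^+ 2 - (j r0 + j r1 * be) =
  (be ^+ 2 + j (wa1 E) * j a0 * be + j (wa3 E) * be) -
  (j a0 ^+ 3 + j (wa2 E) * j a0 ^+ 2 + j (wa4 E) * j a0 + j (wa6 E)).
  by rewrite /r0 /r1 !rmorphD !rmorphN ?rmorphM ?rmorphXn; ring.
by rewrite h subrr.
Qed.

Definition sfun (z : K) : L := j (decomp z).1 + j (decomp z).2 * be.

Lemma s_phi c : sfun (phi c) = j c.1 + j c.2 * be.
Proof. by rewrite /sfun decompK. Qed.

Lemma sfunB : forall z w, sfun (z - w) = sfun z - sfun w.
Proof.
move=> z w; rewrite -(phiK z) -(phiK w).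
set c := decomp z; set d := decomp w.
have -> : phi c - phi d = phi (c.1 - d.1, c.2 - d.2) by rewrite /phi /= !rmorphB; ring.
by rewrite !s_phi /= !rmorphB; ring.
Qed.

Lemma sfunM : forall z w, sfun (z * w) = sfun z * sfun w.
Proof.
move=> z w; rewrite -(phiK z) -(phiK w).
set c := decomp z; set d := decomp w.
have -> : phi c * phi d = phi (c.1 * d.1 + c.2 * d.2 * r0, c.1 * d.2 + c.2 * d.1 + c.2 * d.2 * r1).
  rewrite /phi /= !rmorphD !rmorphM.
  have -> : (iota c.1 + iota c.2 * y1) * (iota d.1 + iota d.2 * y1) =
    iota c.1 * iota d.1 + (iota c.1 * iota d.2 + iota c.2 * iota d.1) * y1
    + iota c.2 * iota d.2 * y1 ^+ 2 by ring.
  rewrite y1sq; ring.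
rewrite !s_phi /= !rmorphD !rmorphM.
have -> : (j c.1 + j c.2 * be) * (j d.1 + j d.2 * be) =
    j c.1 * j d.1 + (j c.1 * j d.2 + j c.2 * j d.1) * be
    + j c.2 * j d.2 * be ^+ 2 by ring.
rewrite besq; ring.
Qed.

Lemma sfun1 : sfun 1 = 1.
Proof.
have -> : (1 : K) = phi (1, 0) by rewrite /phi /= rmorph1 rmorph0 mul0r addr0.
by rewrite s_phi /= rmorph1 rmorph0 mul0r addr0.
Qed.

Definition sfun' := sfun.
HB.instance Definition _ := GRing.isZmodMorphism.Build K L sfun' sfunB.
HB.instance Definition _ := GRing.isMonoidMorphism.Build K L sfun' (sfun1, sfunM).
Definition srm : {rmorphism K -> L} := sfun'.

Lemma conj_exists : conj_of iota j (Some (iota a0, y1)) (Some (j a0, be)).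
Proof.
exists srm; split.
  move=> c; rewrite /= /sfun' -[iota c](_ : phi (c, 0) = _); last first.
    by rewrite /phi /= rmorph0 mul0r addr0.
  by rewrite s_phi /= rmorph0 mul0r addr0.
rewrite /ptmap /= /sfun'.
have -> : iota a0 = phi (a0, 0) by rewrite /phi /= rmorph0 mul0r addr0.
have -> : y1 = phi (0, 1) by rewrite /phi /= rmorph0 rmorph1 mul1r add0r.
by rewrite !s_phi /= rmorph0 rmorph1 mul0r mul1r addr0 add0r.
Qed.
End Emb.
End QConj.

Lemma Zp_double (p : nat) (x : 'Z_p) : prime p -> odd p -> x + x = 0 -> x = 0.
Proof.
move=> hp ho h; have p1 := prime_gt1 hp.
have u2 : ((2%:R : 'Z_p) \is a GRing.unit) by rewrite unitZpE // coprimen2.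
apply: (mulrI u2); rewrite mulr0 mulr_natl mulr2n; exact: h.
Qed.

Section Count.
Variables (F : finFieldType) (E : wcurve F) (p : nat).
Hypotheses (hp : prime p) (hodd : odd p) (hiso : ratpts_iso_ZpZp E p).

Lemma card_rat : #|ratpts E| = (p ^ 2)%N.
Proof.
have [psi [h1 h2 h3 _]] := hiso.
have -> : ratpts E = psi @: setT.
  apply/setP => P; rewrite !inE; apply/idP/imsetP.
    by move=> /h3 [u <-]; exists u; rewrite ?inE.
  by move=> [u _ ->]; apply: h1.
by rewrite card_imset // cardsT card_prod card_ord Zp_cast ?prime_gt1 // expnS expn1.
Qed.

Lemma psi0 (psi : 'Z_p * 'Z_p -> option (F * F)) : (forall u, onEb E (psi u)) -> injective psi ->
  (forall P, onEb E P -> exists u, psi u = P) ->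
  (forall u v, psi (u.1 + v.1, u.2 + v.2) = addE E (psi u) (psi v)) ->
  psi (0, 0) = None.
Proof.
move=> h1 h2 h3 h4; have [v hv] := h3 None isT.
have e := h4 v v; rewrite hv /= -hv in e.
have e2 := h2 _ _ e; rewrite -hv; congr psi.
case: v e2 {e hv} => v1 v2 /= [e1 e2].
have -> : v1 = 0 by apply: (addIr v1); rewrite add0r.
by have -> : v2 = 0 by apply: (addIr v2); rewrite add0r.
Qed.


Lemma no2tors b be : onEb E (Some (b, be)) -> be + be + wa1 E * b + wa3 E != 0.
Proof.
have [psi [h1 h2 h3 h4]] := hiso; move=> hon; apply/negP => /eqP h.
have [u hu] := h3 _ hon.
have e := h4 u u; rewrite hu /= eqxx h eqxx /= -(psi0 h1 h2 h3 h4) in e.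
have ee := h2 _ _ e.
have e1 : u.1 + u.1 = 0 := congr1 fst ee.
have e2 : u.2 + u.2 = 0 := congr1 snd ee.
have u1 := Zp_double hp hodd e1; have u2 := Zp_double hp hodd e2.
move: hu; case: u u1 u2 {e e1 e2 ee} => v1 v2 /= -> ->.
by rewrite (psi0 h1 h2 h3 h4).
Qed.

Definition xin (bs : seq F) (P : option (F * F)) : bool :=
  if P is Some (al, _) then al \in bs else false.

Definition oppy b be := - be - wa1 E * b - wa3 E.

Lemma fiber b be : onEb E (Some (b, be)) ->
  [set P in ratpts E | xin [:: b] P] = [set Some (b, be); Some (b, oppy b be)].
Proof.
move=> hon; apply/setP => -[[al ga]|]; rewrite !inE //=.
rewrite in_cons in_nil orbF.
apply/andP/orP.
  move=> [hg /eqP hb]; subst al.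
  move/eqP: hg => hg; move/eqP: hon => hon.
  have e : (ga - be) * (ga + be + wa1 E * b + wa3 E) = 0.
    have -> : (ga - be) * (ga + be + wa1 E * b + wa3 E) =
      (ga ^+ 2 + wa1 E * b * ga + wa3 E * ga) - (be ^+ 2 + wa1 E * b * be + wa3 E * be) by ring.
    by rewrite hg hon subrr.
  move/eqP: e; rewrite mulf_eq0 => /orP [/eqP e|/eqP e].
    by left; rewrite -(subr0 ga) -e subKr.
  right; apply/eqP; congr (Some (_, _)); rewrite /oppy.
  by apply/eqP; rewrite -subr_eq0 -e; apply/eqP; ring.
move=> [/eqP [-> ->]|/eqP [-> ->]]; rewrite eqxx ?andbT; split => //.

move/eqP: hon => hon; apply/eqP; rewrite /oppy -hon; ring.
Qed.

Lemma card_fiber b be : onEb E (Some (b, be)) ->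
  #|[set P in ratpts E | xin [:: b] P]| = 2%N.
Proof.
move=> hon; rewrite (fiber hon) cards2.
suff -> : (Some (b, be) != Some (b, oppy b be)) by [].
apply/eqP => -[e]; have := no2tors hon; rewrite {2}e /oppy.
suff -> : be + (- be - wa1 E * b - wa3 E) + wa1 E * b + wa3 E = 0 by rewrite eqxx.
ring.
Qed.

Definition goodx (bs : seq F) := forall b, b \in bs -> exists be, onEb E (Some (b, be)).

Lemma card_xin bs : uniq bs -> goodx bs ->
  #|[set P in ratpts E | xin bs P]| = (2 * size bs)%N.
Proof.
elim: bs => [|b bs IH] /=.
  move=> _ _; rewrite muln0; apply/eqP; rewrite cards_eq0; apply/eqP/setP => P.
  by rewrite !inE; case: P => [[]|] //= *; rewrite andbF.
move=> /andP [nb ub] hg.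
have hg' : goodx bs by move=> c hc; apply: hg; rewrite in_cons hc orbT.
have [be hbe] := hg b (mem_head _ _).
have -> : [set P in ratpts E | xin (b :: bs) P] =
   [set P in ratpts E | xin [:: b] P] :|: [set P in ratpts E | xin bs P].
  apply/setP => -[[al ga]|]; rewrite !inE //= !in_cons in_nil orbF.
  by rewrite andb_orr.
rewrite cardsU (card_fiber hbe) IH //.
have -> : [set P in ratpts E | xin [:: b] P] :&: [set P in ratpts E | xin bs P] = set0.
  apply/setP => -[[al ga]|]; rewrite !inE //= in_cons in_nil orbF.
  case: (al =P b) => [->|_]; by rewrite ?(negbTE nb) !andbF.
by rewrite cards0 subn0 mulnS.
Qed.

Lemma exists_bs m : (2 * m < p ^ 2)%N ->
  exists bs, [/\ uniq bs, size bs = m & goodx bs].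
Proof.
elim: m => [|m IH] hm; first by exists [::].
have hm' : (2 * m < p ^ 2)%N.
  move: hm; set P2 := (p ^ 2)%N; clearbody P2; lia.
have [bs [ub sb gb]] := IH hm'.
case: (pickP (fun P => (P \in ratpts E) && (P != None) && ~~ xin bs P)) => [P|none].
  case: P => [[b be]|]; rewrite ?eqxx ?andbF //= inE => /andP [/andP [hon _] nb].
  exists (b :: bs); split => /=; first by rewrite nb ub.
    by rewrite sb.
  move=> c; rewrite in_cons => /orP [/eqP ->|]; first by exists be.
  exact: gb.
exfalso.
have hsub : ratpts E \subset None |: [set P in ratpts E | xin bs P].
  apply/subsetP => P hP; rewrite !inE; have := none P; rewrite hP /=.
  case: (P =P None) => [->|_] //= /negbFE ->; move: hP; rewrite inE => ->. by [].
have := subset_leq_card hsub; rewrite card_rat cardsU1 card_xin // sb.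
move: hm; set P2 := (p ^ 2)%N; clearbody P2; case: (_ \notin _) => /=; lia.
Qed.

End Count.

Section FL.
Variable (L : fieldType).
Local Notation P2 := {poly {poly L}}.
Local Notation x := (Xx L).
Local Notation cc c := ((c%:P)%:P : {poly {poly L}}).

Definition fac (a b : L) : rfun L := (x - cc b, x - cc a).
Definition fbase (a : L) (o : bool) : rfun L := if o then (1, x - cc a) else (1, 1).
Definition fL (a : L) (bs : seq L) (o : bool) : rfun L :=
  foldr (fun b acc => rmul (fac a b) acc) (fbase a o) bs.
Definition vaff (a : L) (bs : seq L) (o : bool) (al : L) : L :=
  foldr (fun b acc => (al - b) / (al - a) * acc) (if o then 1 / (al - a) else 1) bs.

Lemma fL2 a bs o : (fL a bs o).2 = (x - cc a) ^+ (size bs + o).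
Proof.
elim: bs => [|b bs IH] /=; first by case: o; rewrite /= ?expr1 ?expr0.
by rewrite IH exprS.
Qed.

Lemma fL_inf (E : wcurve L) a bs o : val_at E None (fL a bs o) (if o then 0 else 1).
Proof.
elim: bs => [|b bs IH].
  by case: o; rewrite /fL /fbase; [exact: vinf_inv | exact: (val_one E None)].
have -> : fL a (b :: bs) o = rmul (fac a b) (fL a bs o) by [].
rewrite -[X in val_at _ _ _ X]mul1r; apply: val_mul IH; exact: vinf_fac.
Qed.

Lemma fL_aff (E : wcurve L) a bs o al be : al != a ->
  val_at E (Some (al, be)) (fL a bs o) (vaff a bs o al).
Proof.
move=> ha; elim: bs => [|b bs IH].
  by case: o; rewrite /fL /vaff /fbase; [exact: vaff_inv | exact: (val_one E _)].
have -> : fL a (b :: bs) o = rmul (fac a b) (fL a bs o) by [].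
apply: val_mul IH; exact: vaff_fac.
Qed.

Lemma vaff_eq0 a bs o al : al != a -> (vaff a bs o al == 0) = (al \in bs).
Proof.
move=> ha; have ha' : al - a != 0 by rewrite subr_eq0.
elim: bs => [|b bs IH] /=.
  by case: o; rewrite ?div1r ?invr_eq0 ?oner_eq0 // (negbTE ha').
rewrite !mulf_eq0 invr_eq0 (negbTE ha') orbF IH in_cons subr_eq0.
by [].
Qed.

Lemma wf_fL (E : wcurve L) a bs o : wf_rfun E (fL a bs o).
Proof.
rewrite /wf_rfun fL2; apply: notinW.
  by rewrite expf_neq0 // /Xx -rmorphB polyC_eq0 polyXsubC_eq0.
by rewrite /Xx -rmorphB -rmorphXn size_polyC; case: (_ != 0).
Qed.

Lemma reg_conj (E : wcurve L) a bs (o : bool) k be : (size bs + o <= k)%N ->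
  regular_at E (Some (a, be)) (rmul (rexp (x - cc a, 1) k) (fL a bs o)).
Proof.
move=> hk; exists (ev2 ((x - cc a) ^+ (k - (size bs + o)) * (fL a bs o).1) a be / 1).
exists ((x - cc a) ^+ (k - (size bs + o)) * (fL a bs o).1, 1); split.
  exists 0; rewrite mul0r /rmul /rexp /= fL2 expr1n mul1r mulr1.
  by rewrite mulrAC -exprD subnK // subrr.
by split => //; rewrite /= ev21 ?oner_eq0.
Qed.

End FL.

Lemma map2C (F L : fieldType) (j : {rmorphism F -> L}) c :
  map_poly (map_poly j) ((c%:P)%:P) = ((j c)%:P)%:P.
Proof. rewrite map_polyC /=. rewrite map_polyC. by []. Qed.
Lemma map2B (F L : fieldType) (j : {rmorphism F -> L}) (p q : {poly {poly F}}) :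
  map_poly (map_poly j) (p - q) = map_poly (map_poly j) p - map_poly (map_poly j) q.
Proof. exact: rmorphB. Qed.
Lemma map2M (F L : fieldType) (j : {rmorphism F -> L}) (p q : {poly {poly F}}) :
  map_poly (map_poly j) (p * q) = map_poly (map_poly j) p * map_poly (map_poly j) q.
Proof. exact: rmorphM. Qed.
Lemma map21 (F L : fieldType) (j : {rmorphism F -> L}) :
  map_poly (map_poly j) (1 : {poly {poly F}}) = 1.
Proof. exact: rmorph1. Qed.
Lemma map2x (F L : fieldType) (j : {rmorphism F -> L}) :
  map_poly (map_poly j) (Xx F) = Xx L.
Proof. by rewrite /Xx map_polyC /= map_polyX. Qed.

Lemma rmap_fL (F L : fieldType) (j : {rmorphism F -> L}) a bs o :
  rmap j (fL a bs o) = fL (j a) (map j bs) o.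
Proof.
elim: bs => [|b bs IH].
  by case: o; rewrite /rmap /fL /fbase /= ?map21 ?map2B ?map2x ?map2C.
have -> : fL a (b :: bs) o = rmul (fac a b) (fL a bs o) by [].
have -> : fL (j a) (map j (b :: bs)) o = rmul (fac (j a) (j b)) (fL (j a) (map j bs)  o) by [].
by rewrite -IH /rmap /rmul /fac /= !map2M !map2B !map2x !map2C.
Qed.

Lemma inLD_f (F K : finFieldType) (E : wcurve F) (iota : {rmorphism F -> K})
  (Q : option (K * K)) (k : nat) (a0 : F) (y1 : K) (bs : seq F) (o : bool) :
  nonsingular E -> #|K| = (#|F| ^ 2)%N -> Q = Some (iota a0, y1) ->
  (forall c, y1 != iota c) -> onEb (wmap iota E) Q ->
  2%:R * y1 + iota (wa1 E) * iota a0 + iota (wa3 E) != 0 ->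
  (size bs + o <= k)%N -> inLD E iota Q k (fL a0 bs o).
Proof.
move=> hns hK hQe hy1 hQ hwy hko; split; first exact: wf_fL.
have hon : onEb (wmap iota E) (Some (iota a0, y1)) by rewrite -hQe.
have r0 (L : fieldType) (t f : rfun L) : rmul (rexp t 0) f = f.
  by case: f => f1 f2; rewrite /rmul /rexp /= !expr0 !mul1r.
move=> L j R hR; rewrite rmap_fL; split.
  move=> [s [hs hRs]]; rewrite hQe /ptmap /= hs in hRs; subst R.
  exists (Xx L - ((j a0)%:P)%:P, 1); split.
    apply: Wnz_x => //=.
    have : s (2%:R * y1 + iota (wa1 E) * iota a0 + iota (wa3 E)) != 0 by rewrite fmorph_eq0.
    by rewrite !rmorphD !rmorphM !hs rmorph_nat.
  by apply: reg_conj; rewrite size_map.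
move=> ncj; case: R hR ncj => [[al be]|] hR ncj.
  have [t ht] := unif_aff hR (hns L j al be hR).
  exists t; split => //; rewrite r0.
  have [ha|ha] := eqVneq al (j a0).
    by exfalso; apply: ncj; subst al; rewrite hQe; exact: (conj_exists hy1 hon hK hR).
  by eexists; apply: fL_aff.
exists (Xx L, 'X); split; first exact: unif_inf.
by rewrite r0; eexists; apply: fL_inf.
Qed.

Unset Implicit Arguments.
Set Strict Implicit.

Theorem mainTheorem7 (F K : finFieldType) (E : wcurve F) (p : nat)
    (iota : {rmorphism F -> K}) (Q : option (K * K)) (k : nat) :
  (7 <= #|F|)%N ->
  prime p -> odd p ->
  nonsingular E ->
  ratpts_iso_ZpZp E p ->
  #|K| = (#|F| ^ 2)%N ->
  onEb (wmap iota E) Q ->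
  ~ (exists P, onEb E P /\ ptmap iota P = Q) ->
  addE (wmap iota E) Q (frob #|F| Q) = None ->
  (p %| k)%N -> (0 < k)%N -> (2 * k < p ^ 2)%N ->
  forall w : nat, (p ^ 2 - 2 * k <= w <= p ^ 2)%N ->
    (0 < A_w E iota Q k w)%N.
Proof.
move=> h7 hp hodd hns hiso hK hQ hnr hfr hpk hk0 hk2 w /andP [hw1 hw2].
have [a0 [y1 [hQe hy1 hwy]]] := Q_form hQ hnr hfr.
have hon : onEb (wmap iota E) (Some (iota a0, y1)) by rewrite -hQe.
set z := (p ^ 2 - w)%N.
have hz : (z <= 2 * k)%N.
  rewrite /z; move: hw1 hk2; set P2 := (p ^ 2)%N; clearbody P2; lia.
have hzo := odd_double_half z.
set m := z./2 in hzo; set o := odd z in hzo.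
have hm : (2 * m < p ^ 2)%N.
  move: hz hk2 hzo; set P2 := (p ^ 2)%N; clearbody P2; rewrite -muln2; case: (odd z); lia.
have [bs [ub sb gb]] := exists_bs hp hodd hiso hm.
have hko : (size bs + o <= k)%N.
  rewrite sb; move: hz hzo; rewrite -muln2; case: (odd z); lia.
pose vF (P : option (F * F)) : F :=
  if P is Some (al, _) then vaff a0 bs o al else (if o then 0 else 1).
pose c : 'rV[F]_#|ratpts E| := \row_i vF (enum_val i).
have inc : in_code E iota Q k c.
  exists (fL a0 bs o); split; first exact: (inLD_f (y1 := y1)).
  move=> i; rewrite mxE; have := enum_valP i; rewrite inE.
  case: (enum_val i) => [[al be]|] hP /=; last exact: fL_inf.
  have ha : al != a0.
    by apply/eqP => e; subst al; have := no_rat_a0 hy1 hon be; rewrite hP.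
  exact: fL_aff.
have N0 : None \in ratpts E by rewrite inE.
have hw : hweight c = w.
  rewrite /hweight.
  have -> : #|[set i | c 0 i != 0]| = #|[set P in ratpts E | vF P != 0]|.
    rewrite -(card_imset _ enum_val_inj); apply: eq_card => P.
    apply/imsetP/idP.
      move=> [i hi ->]; rewrite inE enum_valP /=; move: hi; rewrite inE /c mxE.
      by [].
    rewrite inE => /andP [hP hv]; exists (enum_rank_in hP P).
      by rewrite inE /c mxE enum_rankK_in.
    by rewrite enum_rankK_in.
  have hZ : [set P in ratpts E | vF P == 0] =
      (if o then None |: [set P in ratpts E | xin bs P] else [set P in ratpts E | xin bs P]).
    apply/setP => -[[al be]|]; last by rewrite !inE /=; case: (o); rewrite !inE /= ?eqxx ?oner_eq0 ?andbF.
    have hz2 : (Some (al, be) \in ratpts E) -> al != a0.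
      rewrite inE => hP; apply/eqP => e; subst al.
      by have := no_rat_a0 hy1 hon be; rewrite hP.
    rewrite !inE; case hP : (onEb E (Some (al, be))); last by case: (o); rewrite /= !inE hP.
    rewrite /= vaff_eq0; last by apply: hz2; rewrite inE hP.
    by case: (o); rewrite /= !inE hP.
  have cZ : #|[set P in ratpts E | vF P == 0]| = (o + 2 * m)%N.
    rewrite hZ -sb -(card_xin hp hodd hiso ub gb).
    case: (o); rewrite ?cardsU1 ?inE //.
  have hID := cardsID [set P | vF P == 0] (ratpts E).
  have e1 : ratpts E :&: [set P | vF P == 0] = [set P in ratpts E | vF P == 0].
    by apply/setP => P; rewrite !inE.
  have e2 : ratpts E :\: [set P | vF P == 0] = [set P in ratpts E | vF P != 0].
    by apply/setP => P; rewrite !inE andbC.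
  rewrite e1 e2 cZ (card_rat hp hiso) in hID.
  move: hID hzo hw2; rewrite /z -muln2; set P2 := (p ^ 2)%N; clearbody P2.
  set N := #|_|; clearbody N; move=> h1 h2 h3.
  rewrite mulnC in h1; lia.
rewrite /A_w card_gt0; apply/set0Pn; exists c; rewrite inE; apply/andP; split.
  by apply/asboolP.
by apply/eqP.
Qed.
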